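(* Let $q$ be a prime power, $g,s\ge 1$ integers, $V=\mathrm{GF}(q^g)^s$ regarded as a $gs$-dimensional $\mathrm{GF}(q)$-vector space, and let $1\le k\le s$. Consider the action of $\mathrm{SL}(s,q^g)$ on the set $\mathcal{F}_k$ of fat $k$-dimensional $\mathrm{GF}(q)$-subspaces of $V$ given by $U\mapsto \{xA: x\in U\}$ for $A\in\mathrm{SL}(s,q^g)$ (scalar matrices with entries in $\mathrm{GF}(q)^*$ act trivially, so this is the action of $\mathrm{SL}(s,q^g)/\mathrm{GF}(q)^*$). If $k<s$, this action is transitive on $\mathcal{F}_k$. If $k=s$, $\mathcal{F}_s$ splits into exactly $\frac{q^g-1}{q-1}$ orbits, all of the same size.
   Context: A $\mathrm{GF}(q)$-subspace $U\le V$ is fat if $\dim_{\mathrm{GF}(q^g)}\langle U\rangle_{\mathrm{GF}(q^g)}=\dim_{\mathrm{GF}(q)}U$, i.e. some (equivalently every) $\mathrm{GF}(q)$-basis of $U$ is linearly independent over $\mathrm{GF}(q^g)$. Vectors of $V$ are row vectors and matrices act by right multiplication. *)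

(* Defs.v *)
From HB Require Import structures.
From mathcomp Require Import all_boot all_order all_algebra all_field.
Set Implicit Arguments. Unset Strict Implicit. Unset Printing Implicit Defensive.
Import GRing.Theory.
Local Open Scope ring_scope.

(* GF(q) is modelled by a finite field F, GF(q^g) by a finite field L, with the
   embedding f : F -> L (a ring morphism, hence injective). V = L^s is 'rV[L]_s. *)
Section Fat.
Variables (F L : finFieldType) (f : {rmorphism F -> L}) (s : nat).

Definition Fspan k (B : 'M[L]_(k, s)) : {set 'rV[L]_s} :=
  [set map_mx f c *m B | c : 'rV[F]_k].

Definition Ffree k (B : 'M[L]_(k, s)) : bool :=
  [forall c : 'rV[F]_k, (map_mx f c *m B == 0) ==> (c == 0)].

(* U is a fat k-dimensional GF(q)-subspace: it has a GF(q)-basis B of size k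
   and the GF(q^g)-span of U (= row space of B) has dimension k. *)
Definition fat_subspace k (U : {set 'rV[L]_s}) : bool :=
  [exists B : 'M[L]_(k, s), [&& Ffree B, U == Fspan B & \rank B == k]].

Definition fat_set k : {set {set 'rV[L]_s}} := [set U | fat_subspace k U].

Definition mx_image (U : {set 'rV[L]_s}) (A : 'M[L]_s) : {set 'rV[L]_s} :=
  [set x *m A | x in U].

Definition SL_orbit (U : {set 'rV[L]_s}) : {set {set 'rV[L]_s}} :=
  [set mx_image U A | A in [set A : 'M[L]_s | \det A == 1]].

End Fat.

(* Main.v *)
Require Import Defs.
From mathcomp Require Import all_boot all_order all_algebra all_field.
From mathcomp Require Import ring.
Set Implicit Arguments. Unset Strict Implicit. Unset Printing Implicit Defensive.
Import GRing.Theory.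
Local Open Scope ring_scope.

Section Aux.
Variables (F L : finFieldType) (f : {rmorphism F -> L}).

Lemma mx_image_Fspan s k (B : 'M[L]_(k, s)) A :
  mx_image (Fspan f B) A = Fspan f (B *m A).
Proof.
rewrite /mx_image /Fspan -imset_comp; apply: eq_imset => c.
by rewrite /= mulmxA.
Qed.

Lemma mx_image_comp s (X : {set 'rV[L]_s}) A B :
  mx_image (mx_image X A) B = mx_image X (A *m B).
Proof.
rewrite /mx_image -imset_comp; apply: eq_imset => c.
by rewrite /= mulmxA.
Qed.

Lemma mx_image1 s (X : {set 'rV[L]_s}) : mx_image X 1%:M = X.
Proof.
rewrite /mx_image (eq_imset (g := id)) ?imset_id // => x; exact: mulmx1.
Qed.

Lemma SL_orbitP s (X Y : {set 'rV[L]_s}) :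
  reflect (exists A, \det A = 1 /\ Y = mx_image X A) (Y \in SL_orbit X).
Proof.
apply: (iffP imsetP) => [[A] | [A [dA ->]]].
  by rewrite inE => /eqP dA ->; exists A.
by exists A; rewrite // inE dA.
Qed.

Lemma SL_orbit_self s (X : {set 'rV[L]_s}) : X \in SL_orbit X.
Proof. by apply/SL_orbitP; exists 1%:M; rewrite det1 mx_image1. Qed.

Lemma SL_orbit_eq s (X Y : {set 'rV[L]_s}) :
  (SL_orbit X == SL_orbit Y) = (Y \in SL_orbit X).
Proof.
apply/eqP/idP => [-> | /SL_orbitP [A [dA ->]]]; first exact: SL_orbit_self.
have uA : A \in unitmx by rewrite unitmxE dA unitr1.
apply/eqP; rewrite eqEsubset; apply/andP; split; apply/subsetP => Z /SL_orbitP [C [dC ->]].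
  apply/SL_orbitP; exists (invmx A *m C); split.
    by rewrite det_mulmx det_inv dA dC invr1 mulr1.
  by rewrite mx_image_comp mulmxA mulmxV // mul1mx.
apply/SL_orbitP; exists (A *m C); split; first by rewrite det_mulmx dA dC mulr1.
by rewrite mx_image_comp.
Qed.

Lemma Fspan_mulF s k (M : 'M[F]_k) (C : 'M[L]_(k, s)) : M \in unitmx ->
  Fspan f (map_mx f M *m C) = Fspan f C.
Proof.
move=> uM; apply/setP => x; apply/imsetP/imsetP => [[c _ ->] | [c _ ->]].
  by exists (c *m M); rewrite // map_mxM mulmxA.
exists (c *m invmx M) => //.
by rewrite map_mxM !mulmxA -(mulmxA _ _ (map_mx f M)) -map_mxM mulVmx // map_mx1 mulmx1.
Qed.

Definition dg (R : nzRingType) s (a : R) : 'M[R]_s :=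
  diag_mx (\row_(i < s) (if (i == 0 :> nat) then a else 1)).

Lemma det_dg (R : comNzRingType) s (a : R) : (0 < s)%N -> \det (dg s a) = a.
Proof.
case: s => // n _; rewrite det_diag big_ord_recl big1 ?mulr1 => [|i _]; rewrite mxE //.
Qed.

Lemma map_dg s (c : F) : map_mx f (dg s c) = dg s (f c).
Proof.
apply/matrixP => i j; rewrite !mxE rmorphMn; congr (_ *+ _).
by case: ifP; rewrite ?rmorph1.
Qed.


Lemma Fspan_eq_mul s (B C : 'M[L]_s) : Fspan f B = Fspan f C ->
  exists M : 'M[F]_s, B = map_mx f M *m C.
Proof.
move=> E.
have H : forall i, exists c : 'rV[F]_s, row i B = map_mx f c *m C.
  move=> i; have : row i B \in Fspan f B.
    by apply/imsetP; exists (delta_mx 0 i); rewrite // map_delta_mx -rowE.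
  by rewrite E => /imsetP [c _ ->]; exists c.
have [cf Hc] := fin_all_exists H.
exists (\matrix_(i, j) cf i 0 j); apply/row_matrixP => i.
rewrite Hc row_mul -map_row; congr (map_mx f _ *m C).
by apply/rowP => j; rewrite !mxE.
Qed.

Lemma crit s (B C : 'M[L]_s) : (0 < s)%N -> B \in unitmx -> C \in unitmx ->
  (Fspan f C \in SL_orbit (Fspan f B)) = [exists c : F, \det B == f c * \det C].
Proof.
move=> s0 uB uC; apply/SL_orbitP/existsP => [[A [dA]] | [c /eqP dB]].
  rewrite mx_image_Fspan => /esym /Fspan_eq_mul [M EM].
  exists (\det M); apply/eqP.
  by rewrite -det_map_mx -det_mulmx -EM det_mulmx dA mulr1.
have dB0 : \det B != 0 by rewrite -unitfE -unitmxE.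
have c0 : c != 0 by apply: contraNneq dB0 => c0; rewrite dB c0 rmorph0 mul0r.
exists (invmx B *m map_mx f (dg s c) *m C); split.
  rewrite !det_mulmx det_map_mx det_dg // det_inv dB.
  have fc0 : f c != 0 by rewrite fmorph_eq0.
  have dC0 : \det C != 0 by rewrite -unitfE -unitmxE.
  by field; apply/andP.
rewrite mx_image_Fspan !mulmxA mulmxV // mul1mx Fspan_mulF //.
by rewrite unitmxE det_dg // unitfE.
Qed.

Lemma unit_fat s (B : 'M[L]_s) : B \in unitmx -> Fspan f B \in fat_set f s s.
Proof.
move=> uB; rewrite inE; apply/existsP; exists B; rewrite mxrank_unit // !eqxx !andbT.
apply/forallP => c; apply/implyP => /eqP H.
apply/eqP; apply: (@map_mx_inj _ _ f); rewrite map_mx0.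
by rewrite -[map_mx f c]mulmx1 -(mulmxV uB) mulmxA H mul0mx.
Qed.

Lemma fat_unit s (U : {set 'rV[L]_s}) : U \in fat_set f s s ->
  exists2 B : 'M[L]_s, B \in unitmx & U = Fspan f B.
Proof.
rewrite inE => /existsP [B /and3P [_ /eqP -> rB]].
by exists B; rewrite // -row_free_unit.
Qed.


Lemma complete k n (B : 'M[L]_(k, k + n)) : \rank B = k ->
  exists2 P : 'M[L]_(k + n), P \in unitmx & usubmx P = B.
Proof.
move=> rB; exists (block_mx (col_ebase B) 0 0 1%:M *m row_ebase B).
  by rewrite unitmx_mul row_ebase_unit andbT unitmxE det_ublock det1 mulr1 -unitmxE col_ebase_unit.
rewrite -mul_usub_mx block_mxEv col_mxKu.
transitivity (col_ebase B *m pid_mx k *m row_ebase B); last by have := mulmx_ebase B; rewrite rB.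
by rewrite pid_mx_row mul_mx_row mulmx1 mulmx0.
Qed.

Lemma part1 k n (B C : 'M[L]_(k, k + n.+1)) : \rank B = k -> \rank C = k ->
  exists A, \det A = 1 /\ B *m A = C.
Proof.
move=> rB rC; have [P uP PB] := complete rB; have [Q uQ QC] := complete rC.
set a := \det P / \det Q.
set D : 'M[L]_(k + n.+1) := block_mx 1%:M 0 0 (dg n.+1 a).
exists (invmx P *m (D *m Q)); split.
  rewrite det_mulmx det_inv det_mulmx det_ublock det1 mul1r det_dg // /a.
  have dP : \det P != 0 by rewrite -unitfE -unitmxE.
  have dQ : \det Q != 0 by rewrite -unitfE -unitmxE.
  by field; apply/andP.
rewrite -PB mul_usub_mx mulmxA mulmxV // mul1mx -mul_usub_mx /D block_mxEv col_mxKu.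
by rewrite -QC -{1}(vsubmxK Q) mul_row_col mul1mx mul0mx addr0.
Qed.


Lemma orbit_le s (B C : 'M[L]_s) : (0 < s)%N -> B \in unitmx -> C \in unitmx ->
  (#|SL_orbit (Fspan f B)| <= #|SL_orbit (Fspan f C)|)%N.
Proof.
move=> s0 uB uC; set T := invmx B *m C.
have uT : T \in unitmx by rewrite unitmx_mul unitmx_inv uB.
have mxK : cancel (fun X => mx_image X T) (fun X => mx_image X (invmx T)).
  by move=> X; rewrite mx_image_comp mulmxV // mx_image1.
rewrite -(card_imset _ (can_inj mxK)); apply: subset_leq_card.
apply/subsetP => Y /imsetP [X /SL_orbitP [A [dA ->]] ->].
rewrite mx_image_comp mx_image_Fspan crit //; last first.
  by rewrite unitmx_mul uB unitmx_mul uT unitmxE dA unitr1.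
apply/existsP; exists 1; rewrite rmorph1 mul1r /T !det_mulmx dA mul1r det_inv.
by rewrite mulrA mulfV ?mul1r // -unitfE -unitmxE.
Qed.

Lemma orbit_count s : (0 < s)%N ->
  (#|[set SL_orbit U | U in fat_set f s s]| * #|F|.-1 = #|L|.-1)%N.
Proof.
move=> s0.
pose psi := fun a : L => SL_orbit (Fspan f (dg s a)).
have udg : forall a : L, a != 0 -> dg s a \in unitmx.
  by move=> a a0; rewrite unitmxE det_dg // unitfE.
have Oeq : [set SL_orbit U | U in fat_set f s s] = psi @: [set~ 0].
  apply/setP => O; apply/imsetP/imsetP => [[U /fat_unit [B uB ->] ->] | [a]].
    have dB0 : \det B != 0 by rewrite -unitfE -unitmxE.
    exists (\det B); first by rewrite in_setC1.
    apply/eqP; rewrite SL_orbit_eq crit ?udg //; apply/existsP; exists 1.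
    by rewrite rmorph1 mul1r det_dg.
  rewrite in_setC1 => a0 ->; exists (Fspan f (dg s a)) => //.
  exact: unit_fat (udg _ a0).
have fib : forall a, a != 0 ->
    [set a' in [set~ 0] | psi a' == psi a] = (fun c => f c * a) @: [set~ (0 : F)].
  move=> a a0; apply/setP => a'; rewrite !inE; apply/andP/imsetP => [[a'0] | [c]].
    rewrite /psi SL_orbit_eq crit ?udg // => /existsP [c /eqP].
    rewrite !det_dg // => Ea'.
    have c0 : c != 0 by apply: contraNneq a'0 => c0; rewrite Ea' c0 rmorph0 mul0r.
    by exists c; rewrite ?in_setC1.
  rewrite in_setC1 => c0 ->; split; first by rewrite mulf_neq0 ?fmorph_eq0.
  rewrite /psi SL_orbit_eq crit ?udg ?mulf_neq0 ?fmorph_eq0 //.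
  by apply/existsP; exists c; rewrite !det_dg.
rewrite Oeq -(cardsC1 (0 : L)) -[#|[set~ 0]|]sum1_card.
rewrite (partition_big_imset psi).
rewrite -sum_nat_const; apply: eq_bigr => O /imsetP [a]; rewrite in_setC1 => a0 ->.
rewrite sum1_card -(cardsC1 (0 : F)) -(card_imset _ (f := fun c => f c * a)); last first.
  by move=> x y /(mulIf a0) /fmorph_inj.
rewrite -fib //; apply: eq_card => x; by rewrite !inE; rewrite unfold_in /= in_setC1.
Qed.

End Aux.
Unset Implicit Arguments.

Theorem lemma13 (F L : finFieldType) (f : {rmorphism F -> L}) (q g s k : nat) :
  #|F| = q -> #|L| = (q ^ g)%N -> (1 <= g)%N -> (1 <= s)%N ->
  (1 <= k)%N -> (k <= s)%N ->
  ((k < s)%N ->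
     forall U W, U \in fat_set f s k -> W \in fat_set f s k ->
       exists A : 'M[L]_s, \det A = 1 /\ mx_image U A = W) /\
  (k = s ->
     #|[set SL_orbit U | U in fat_set f s k]| = ((q ^ g - 1) %/ (q - 1))%N /\
     forall U W, U \in fat_set f s k -> W \in fat_set f s k ->
       #|SL_orbit U| = #|SL_orbit W|).
Proof.
move=> hF hL g1 s1 k1 ks; split.
  move=> ltks.
  have [n En] : exists n, s = (k + n.+1)%N.
    by exists (s - k.+1)%N; rewrite addnS -addSn subnKC.
  subst s => U W.
  rewrite !inE => /existsP [B /and3P [_ /eqP -> /eqP rB]].
  move=> /existsP [C /and3P [_ /eqP -> /eqP rC]].
  have [A [dA BA]] := part1 rB rC.
  by exists A; split => //; rewrite mx_image_Fspan BA.
move=> eks; subst k; split.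
  have := orbit_count f s1; rewrite hF hL => H.
  have q1 : (0 < q.-1)%N.
    rewrite -hF -(cardsC1 (0 : F)); apply/card_gt0P; exists 1.
    by rewrite in_setC1 oner_eq0.
  by rewrite !subn1 -H mulnK.
move=> U W /fat_unit [B uB ->] /fat_unit [C uC ->].
by apply/eqP; rewrite eqn_leq !orbit_le.
Qed.
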